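(* Let $k$ be a field. If $F$ and $G$ are strictly additive (abelian group)-valued $k$-functors and $\pi\colon F\to G$ is an epimorphism in the category of (abelian group)-valued $k$-functors, then $\pi$ splits in that category.
   Context: A $k$-functor is a functor from commutative $k$-algebras to abelian groups. Epimorphisms are objectwise surjective morphisms. $\mathbb{G}_a^\alpha$ ($\alpha\in\{0,1,\dots,\infty\}$) is $B\mapsto\bigoplus_{i=1}^\alpha B$. A functor is strictly additive if it is isomorphic to some $\mathbb{G}_a^\alpha$. *)

(* Defs.v *)
From HB Require Import structures.
From mathcomp Require Import all_boot all_order all_algebra.
Unset Printing Implicit Defensive.
Import GRing.Theory.
Local Open Scope ring_scope.

(* Functoriality is stated pointwise. *)
Record kFunctor (k : fieldType) := KFunctor {
  fobj : comAlgType k -> zmodType;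
  fmap : forall (A B : comAlgType k), {lrmorphism A -> B} -> fobj A -> fobj B;
  fmapD : forall (A B : comAlgType k) (f : {lrmorphism A -> B}) (x y : fobj A),
      fmap A B f (x + y) = fmap A B f x + fmap A B f y;
  fmap_id : forall (A : comAlgType k) (f : {lrmorphism A -> A}),
      (forall a, f a = a) -> forall x, fmap A A f x = x;
  fmap_comp : forall (A B C : comAlgType k) (f : {lrmorphism A -> B}) (g : {lrmorphism B -> C})
      (h : {lrmorphism A -> C}),
      (forall a, h a = g (f a)) -> forall x, fmap A C h x = fmap B C g (fmap A B f x)
}.
Arguments fmap {k} _ {A B} _ _.
Arguments fobj {k} _ _.

Record natTrans {k : fieldType} (F G : kFunctor k) := NatTrans {
  nt :> forall A : comAlgType k, fobj F A -> fobj G A;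
  ntD : forall (A : comAlgType k) (x y : fobj F A), nt A (x + y) = nt A x + nt A y;
  nt_nat : forall (A B : comAlgType k) (f : {lrmorphism A -> B}) (x : fobj F A),
      nt B (fmap F f x) = fmap G f (nt A x)
}.

Section Ga.
Variable k : fieldType.

Definition GaFin (n : nat) : kFunctor k.
refine (@KFunctor k (fun B => 'rV[B]_n : zmodType)
          (fun A B f v => map_mx f v) _ _ _).
- by move=> A B f x y; apply/matrixP => i j; rewrite !mxE rmorphD.
- by move=> A f hf x; apply/matrixP => i j; rewrite !mxE hf.
- by move=> A B C f g h hh x; apply/matrixP => i j; rewrite !mxE hh.
Defined.

(* G_a^infty: B |-> (+)_{i in N} B, represented by the additive group of
   B[X] (finitely supported coefficient sequences) *)
Definition GaInf : kFunctor k.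
refine (@KFunctor k (fun B => {poly B} : zmodType)
          (fun A B f p => map_poly f p) _ _ _).
- by move=> A B f x y; apply/polyP => i; rewrite !(coefD, coef_map) /= rmorphD.
- by move=> A f hf x; apply/polyP => i; rewrite coef_map /= hf.
- by move=> A B C f g h hh x; apply/polyP => i; rewrite !coef_map /= hh.
Defined.

(* alpha : option nat, with None standing for alpha = infinity *)
Definition Ga (alpha : option nat) : kFunctor k :=
  match alpha with Some n => GaFin n | None => GaInf end.
End Ga.

Definition strictly_additive {k : fieldType} (F : kFunctor k) : Prop :=
  exists (alpha : option nat) (phi : natTrans F (Ga k alpha))
         (psi : natTrans (Ga k alpha) F),
    (forall (A : comAlgType k) x, psi A (phi A x) = x) /\ (forall (A : comAlgType k) y, phi A (psi A y) = y).

Definition epimorphism {k : fieldType} {F G : kFunctor k} (pi : natTrans F G)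
  : Prop := forall (A : comAlgType k) (y : fobj G A), exists x, pi A x = y.

Definition splits {k : fieldType} {F G : kFunctor k} (pi : natTrans F G)
  : Prop := exists sigma : natTrans G F, forall (A : comAlgType k) (y : fobj G A), pi A (sigma A y) = y.

(* Main.v *)
From HB Require Import structures.
Require Import Defs.
From mathcomp Require Import all_boot all_order all_algebra.
From mathcomp Require Import zify.
Import GRing.Theory.
Local Open Scope ring_scope.

Section Ev.
Variable k : fieldType.
Variable (A : comAlgType k) (a : A).
Definition ev : {poly k} -> A := fun p => horner_alg a p.
HB.instance Definition _ := GRing.RMorphism.copy ev (horner_alg a).
Fact ev_scalable : scalable ev.
Proof. by move=> c p; rewrite /ev linearZ /= mulr_algl. Qed.
HB.instance Definition _ := GRing.isScalable.Build k {poly k} A *:%R ev ev_scalable.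
End Ev.
Arguments ev {k A} a.

Section Scalar.
Variable k : fieldType.
Local Notation kt := ({poly k} : comAlgType k).

Lemma evE_wide (A : comAlgType k) (a : A) (p : {poly k}) n : (size p <= n)%N ->
  ev a p = \sum_(i < n) p`_i *: a ^+ i.
Proof.
move=> hn; rewrite /ev /horner_alg /horner_morph (@horner_coef_wide _ n).
  by apply: eq_bigr => i _; rewrite coef_map /= mulr_algl.
exact: leq_trans (size_poly _ _) hn.
Qed.

Lemma evE (A : comAlgType k) (a : A) (p : {poly k}) :
  ev a p = \sum_(i < size p) p`_i *: a ^+ i.
Proof. exact: evE_wide. Qed.

Lemma ev_comp (A B : comAlgType k) (f : {lrmorphism A -> B}) (a : A) p :
  f (ev a p) = ev (f a) p.
Proof.
rewrite !evE raddf_sum; apply: eq_bigr => i _.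
have h := linearZ_LR f (p`_i) (a ^+ i). transitivity (p`_i *: f (a ^+ i)); first exact: h. by rewrite rmorphXn.
Qed.

Lemma evX (A : comAlgType k) (a : A) : ev a 'X = a.
Proof. exact: horner_algX. Qed.

Lemma evXid (p : kt) : ev ('X : kt) p = p.
Proof.
rewrite evE; apply/polyP => j; rewrite coef_sum.
under eq_bigr => i _ do rewrite coefZ coefXn.
case: (ltnP j (size p)) => hj.
  rewrite (bigD1 (Ordinal hj)) //= eqxx mulr1 big1 ?addr0 // => i hi.
  by case: eqP => [e|]; [move: hi; rewrite -val_eqE /= e eqxx | rewrite mulr0].
rewrite nth_default // big1 // => i _.
by case: eqP => [e|]; [move: (ltn_ord i); rewrite -e ltnNge hj | rewrite mulr0].
Qed.

Definition good (n : nat) : bool :=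
  (0 < n)%N && [forall i : 'I_n, (0 < i)%N ==> ('C(n, i)%:R == 0 :> k)].

Lemma good_add n (A : comAlgType k) (a b : A) : good n -> (a + b) ^+ n = a ^+ n + b ^+ n.
Proof.
case/andP; case: n => [//|n] _ /forallP hC.
rewrite exprDn big_ord_recl big_ord_recr /= big1 ?add0r.
  by rewrite subn0 expr0 mulr1 bin0 subnn expr0 mul1r binn.
move=> i _; rewrite -scaler_nat.
have hi : (bump 0 i < n.+1)%N by rewrite /bump /=; have := ltn_ord i; lia.
have := hC (Ordinal hi); rewrite /= /bump /= => /eqP -> //.
by rewrite scale0r.
Qed.
Arguments good_add {n A} a b.

Lemma coef_1X n i : ((1 + 'X) ^+ n : {poly k})`_i = ('C(n, i))%:R.
Proof.
rewrite exprDn coef_sum.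
case: (ltnP n i) => hi.
  rewrite bin_small // big1 // => j _; rewrite expr1n mul1r coefMn coefXn.
  by case: eqP => [e|]; [move: (ltn_ord j); rewrite -e ltnNge hi | rewrite mul0rn].
rewrite (bigD1 (Ordinal (hi : (i < n.+1)%N))) //= big1 ?addr0.
  by rewrite expr1n mul1r coefMn coefXn eqxx.
move=> j hj; rewrite expr1n mul1r coefMn coefXn.
case: eqP => [eij|]; last by rewrite mul0rn.
by move: hj; rewrite -val_eqE /= eij eqxx.
Qed.

Lemma good_char n : good n = (0 < n)%N && ((1 + 'X) ^+ n == 1 + 'X ^+ n :> {poly k}).
Proof.
apply/idP/idP.
  move=> g; rewrite (good_add _ _ g) expr1n.
  by case/andP: g => -> _; rewrite eqxx.
case/andP=> n0 /eqP e; rewrite /good n0 /=; apply/forallP => i; apply/implyP => i0.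
have := coef_1X n i; rewrite e coefD coefXn coefC.
have hin : (i:nat) != n by rewrite neq_ltn ltn_ord.
have hi0 : (i:nat) != 0%N by rewrite -lt0n.
rewrite (negbTE hin) ?(negbTE hi0) /= ?add0r ?addr0 => <- //.
Qed.

Lemma good1 : good 1.
Proof. by rewrite good_char expr1 eqxx. Qed.

Lemma good_mul m n : good m -> good n -> good (m * n).
Proof.
move=> gm gn; rewrite good_char muln_gt0.
case/andP: (gm) => -> _; case/andP: (gn) => -> _ /=.
by rewrite exprM (good_add _ _ gm) expr1n (good_add _ _ gn) expr1n -exprM.
Qed.

Lemma good_div m n : good n -> good (m * n) -> good m.
Proof.
move=> gn gmn; rewrite good_char.
case/andP: (gmn); rewrite muln_gt0 => /andP[-> _] _ /=.
set x := (1 + 'X) ^+ m; set y := 1 + 'X ^+ m.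
have hn : (0 < n)%N by case/andP: gn.
have hxy : x ^+ n = y ^+ n.
  by rewrite /x /y -exprM (good_add _ _ gmn) expr1n (good_add _ _ gn) expr1n -exprM.
have hN : (- y) ^+ n = - y ^+ n.
  apply/eqP; rewrite -subr_eq0 opprK addrC -(good_add _ _ gn) subrr expr0n.
  by rewrite eqn0Ngt hn.
have : (x - y) ^+ n == 0 by rewrite (good_add _ _ gn) hN hxy subrr.
by rewrite expf_eq0 subr_eq0 => /andP[].
Qed.

Lemma good_mulE m n : good n -> good (m * n) = good m.
Proof.
move=> gn; apply/idP/idP; first exact: good_div.
by move=> gm; apply: good_mul.
Qed.



Definition PP (p : {poly k}) : {poly k} := \poly_(i < size p) (if good i then p`_i else 0).

Lemma coef_PP p i : (PP p)`_i = if good i then p`_i else 0.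
Proof.
rewrite coef_poly; case: ltnP => // h.
by rewrite nth_default //; case: (good i).
Qed.

Lemma PPD p q : PP (p + q) = PP p + PP q.
Proof. by apply/polyP => i; rewrite coefD !coef_PP coefD; case: (good i); rewrite ?addr0. Qed.

Lemma PP0 : PP 0 = 0.
Proof. by apply/polyP => i; rewrite coef_PP coef0; case: (good i). Qed.

Lemma PP_sum m (F : 'I_m -> {poly k}) : PP (\sum_(i < m) F i) = \sum_(i < m) PP (F i).
Proof.
elim: m F => [|m IH] F; first by rewrite !big_ord0 PP0.
by rewrite !big_ord_recr /= PPD IH.
Qed.

Lemma PP_ZXn (c : k) j : PP (c *: 'X^j) = if good j then c *: 'X^j else 0.
Proof.
apply/polyP => i; rewrite coef_PP coefZ coefXn.
case: (eqVneq i j) => [->|ne].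
  by case: (good j); rewrite ?coef0 ?coefZ ?coefXn ?eqxx.
by case: (good i); case: (good j); rewrite ?coef0 ?coefZ ?coefXn ?(negbTE ne) ?mulr0.
Qed.

Lemma PPX : PP 'X = 'X.
Proof. by have := PP_ZXn 1 1; rewrite good1 !scale1r expr1. Qed.

Lemma ev_goodD (A : comAlgType k) (a b : A) (p : {poly k}) :
  (forall i, good i || (p`_i == 0)) -> ev (a + b) p = ev a p + ev b p.
Proof.
move=> hp; rewrite !evE -big_split /=; apply: eq_bigr => i _.
case/orP: (hp i) => [g|/eqP->]; last by rewrite !scale0r addr0.
by rewrite (good_add _ _ g) scalerDr.
Qed.

Lemma ev_PPD (A : comAlgType k) (a b : A) (c : {poly k}) :
  ev (a + b) (PP c) = ev a (PP c) + ev b (PP c).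
Proof. by apply: ev_goodD => i; rewrite coef_PP; case: (good i); rewrite ?eqxx ?orbT. Qed.

Definition sprim (g : {poly k}) := forall a b : kt, ev (a + b) g = ev a g + ev b g.

Lemma sprim0 g : sprim g -> ev (0 : kt) g = 0.
Proof.
move=> h; have h0 := h 0 0; rewrite addr0 in h0.
by apply: (@addrI _ (ev (0 : kt) g)); rewrite -h0 addr0.
Qed.



Lemma uniq_repr N x y i j : (x < N)%N -> (y < N)%N -> (x + N*i = y + N*j)%N -> x = y /\ i = j.
Proof.
move=> hx hy e.
have hij : i = j.
  case: (ltngtP i j) => // h.
  - have : (N * i.+1 <= N * j)%N by rewrite leq_mul2l h orbT.
    rewrite mulnS; lia.
  - have : (N * j.+1 <= N * i)%N by rewrite leq_mul2l h orbT.
    rewrite mulnS; lia.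
by subst; split => //; lia.
Qed.
Arguments uniq_repr {N x y i j}.

Lemma sum_single (R : zmodType) m (F : 'I_m -> R) j :
  (forall i, i != j -> F i = 0) -> \sum_(i < m) F i = F j.
Proof. by move=> h; rewrite (bigD1 j) //= big1 ?addr0. Qed.
Arguments sum_single {R m F} j.

Lemma coef_ev_kt (q g : kt) T : (ev q g)`_T = \sum_(n < size g) g`_n * (q ^+ n)`_T.
Proof. by rewrite evE coef_sum; apply: eq_bigr => i _; rewrite coefZ. Qed.

Lemma coef_XXN N n T : (('X + 'X^N : {poly k}) ^+ n)`_T =
  \sum_(j < n.+1) ('C(n, j))%:R * (T == n - j + N * j)%N%:R.
Proof.
rewrite exprDn coef_sum; apply: eq_bigr => j _.
by rewrite coefMn -exprM -exprD coefXn mulr_natl mulnC.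
Qed.

Lemma S2 g n : sprim g -> g`_n != 0 -> good n.
Proof.
move=> hg hn.
have hd : (n < size g)%N by rewrite ltnNge; apply: contra hn => h; rewrite nth_default.
case: n hn hd => [|n] hn hd.
  have := @sprim0 g hg; move/(congr1 (fun p : {poly k} => p`_0)).
  rewrite coef_ev_kt coef0 (sum_single (Ordinal hd)) /=.
    by rewrite expr0 coef1 mulr1 => e; rewrite e eqxx in hn.
  move=> i; rewrite -val_eqE /=; case: (nat_of_ord i) => [//|i'] _.
  by rewrite exprS mul0r coef0 mulr0.
rewrite /good /=; apply/forallP => i; apply/implyP => i0.
set N := size g; set T := (n.+1 - i + N * i)%N.
have hi : (i < n.+1)%N := ltn_ord i.
have hTN : (N <= T)%N by rewrite /T; nia.
have := hg 'X ('X^N); move/(congr1 (fun p : {poly k} => p`_T)).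
rewrite coefD evXid (nth_default _ hTN) add0r.
rewrite coef_ev_kt (sum_single (Ordinal hd)) /=; last first.
  move=> m; rewrite -val_eqE /= => hm.
  rewrite coef_XXN big1 ?mulr0 // => j _.
  case: eqP => [e|]; last by rewrite mulr0.
  have hm' : (m < N)%N := ltn_ord m.
  have h1 : (n.+1 - i < N)%N by lia.
  have h2 : (m - j < N)%N by lia.
  have [e1 e2] := uniq_repr h1 h2 e.
  by exfalso; move: hm; have := ltn_ord j; lia.
rewrite coef_XXN (sum_single (Ordinal (ltnW (ltn_ord i) : (i < n.+2)%N))) /=; last first.
  move=> j; rewrite -val_eqE /= => hj.
  case: eqP => [e|]; last by rewrite mulr0.
  have h1 : (n.+1 - i < N)%N by lia.
  have h2 : (n.+1 - j < N)%N by lia.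
  have [e1 e2] := uniq_repr h1 h2 e.
  by exfalso; move: hj; rewrite e2 eqxx.
rewrite eqxx mulr1 coef_ev_kt big1.
  by move/eqP; rewrite mulf_eq0 (negbTE hn).
move=> m _; rewrite -exprM coefXn.
case: eqP => [e|]; last by rewrite mulr0.
exfalso; have hm := ltn_ord m.
have h1 : (n.+1 - i < N)%N by lia.
have h2 : (0 < N)%N by lia.
have [e1 e2] := uniq_repr h1 h2 (etrans e (esym (add0n _))).
lia.
Qed.



Lemma ev_sum_sprim g m (F : 'I_m -> kt) : sprim g ->
  ev (\sum_(i < m) F i) g = \sum_(i < m) ev (F i) g.
Proof.
move=> hg; elim: m F => [|m IH] F; first by rewrite !big_ord0 sprim0.
by rewrite !big_ord_recr /= hg IH.
Qed.

Lemma poly_expand (c : kt) : c = \sum_(m < size c) c`_m *: 'X^m.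
Proof. by rewrite -{1}[c]evXid evE. Qed.

Lemma PP_expand (c : kt) : PP c = \sum_(m < size c) (if good m then c`_m *: 'X^m else 0).
Proof.
have hs : (size (PP c) <= size c)%N by exact: size_poly.
rewrite -{1}[PP c]evXid (evE_wide _ _ _ _ hs); apply: eq_bigr => i _.
by rewrite coef_PP; case: (good i); rewrite ?scale0r.
Qed.

Lemma ev_ZXn (c : k) m g :
  ev (c *: 'X^m : kt) g = \sum_(n < size g) (g`_n * c ^+ n) *: 'X^(m * n).
Proof.
rewrite evE; apply: eq_bigr => n _.
by rewrite exprZn -exprM scalerA.
Qed.

Lemma K g c : sprim g -> ev (PP c : kt) g = PP (ev c g).
Proof.
move=> hg.
have -> : ev c g = ev (\sum_(m < size c) c`_m *: 'X^m : kt) g by rewrite -poly_expand.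
rewrite PP_expand ev_sum_sprim // ev_sum_sprim // PP_sum.
apply: eq_bigr => m _.
rewrite ev_ZXn PP_sum.
have ht : forall n : 'I_(size g), PP ((g`_n * c`_m ^+ n) *: 'X^(m * n)) =
    if good m then (g`_n * c`_m ^+ n) *: 'X^(m * n) else 0.
  move=> n; rewrite PP_ZXn.
  case: (eqVneq g`_n 0) => [->|gn]; first by rewrite mul0r scale0r; case: ifP; case: ifP.
  by rewrite good_mulE //; apply: S2 gn.
under eq_bigr => n _ do rewrite ht.
case: (good m); first by rewrite ev_ZXn.
by rewrite big1 // sprim0.
Qed.

End Scalar.
Arguments PP {k} p.
Arguments sprim {k} g.
Arguments good {k} n.
Arguments sum_single {R m F} j _.
Section Fun.
Variable k : fieldType.
Local Notation kt := ({poly k} : comAlgType k).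

Lemma fmap0 (H : kFunctor k) (A B : comAlgType k) (f : {lrmorphism A -> B}) :
  fmap H f 0 = 0.
Proof. by apply: (@addrI _ (fmap H f 0)); rewrite -fmapD !addr0. Qed.

Lemma fmap_sum (H : kFunctor k) (A B : comAlgType k) (f : {lrmorphism A -> B}) m
  (F : 'I_m -> fobj H A) : fmap H f (\sum_(i < m) F i) = \sum_(i < m) fmap H f (F i).
Proof.
elim: m F => [|m IH] F; first by rewrite !big_ord0 fmap0.
by rewrite !big_ord_recr /= fmapD IH.
Qed.

Lemma nt0 (F G : kFunctor k) (p : natTrans F G) A : p A 0 = 0.
Proof. by apply: (@addrI _ (p A 0)); rewrite -ntD !addr0. Qed.

Lemma nt_sum (F G : kFunctor k) (p : natTrans F G) A m (X : 'I_m -> fobj F A) :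
  p A (\sum_(i < m) X i) = \sum_(i < m) p A (X i).
Proof.
elim: m X => [|m IH] X; first by rewrite !big_ord0 nt0.
by rewrite !big_ord_recr /= ntD IH.
Qed.

Lemma fmap_ev_comp (H : kFunctor k) (A B : comAlgType k) (f : {lrmorphism A -> B}) (a : A) x :
  fmap H f (fmap H (ev a) x) = fmap H (ev (f a)) x.
Proof. by symmetry; apply: fmap_comp => p; rewrite ev_comp. Qed.

Lemma fmap_evX (H : kFunctor k) x : fmap H (ev ('X : kt)) x = x.
Proof. by apply: fmap_id => p; apply: evXid. Qed.

Definition prim (H : kFunctor k) (w : fobj H kt) :=
  forall (A : comAlgType k) (a b : A),
    fmap H (ev (a + b)) w = fmap H (ev a) w + fmap H (ev b) w.
Arguments prim {H} w.

Lemma prim0 H w (A : comAlgType k) : @prim H w -> fmap H (ev (0 : A)) w = 0.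
Proof.
move=> h; have h0 := h A 0 0; rewrite addr0 in h0.
by apply: (@addrI _ (fmap H (ev (0 : A)) w)); rewrite -h0 addr0.
Qed.

Lemma prim_sum H m (W : 'I_m -> fobj H kt) : (forall i, prim (W i)) -> prim (\sum_(i < m) W i).
Proof.
move=> hW A a b; rewrite !fmap_sum -big_split /=.
by apply: eq_bigr => i _; rewrite hW.
Qed.

Lemma prim_nt (F G : kFunctor k) (p : natTrans F G) w : prim w -> prim (p kt w).
Proof. by move=> h A a b; rewrite -!nt_nat h ntD. Qed.

Lemma prim_fmap_PP H w c : prim w -> prim (fmap H (ev (PP c : kt)) w).
Proof.
move=> h A a b; rewrite !fmap_ev_comp.
transitivity (fmap H (ev (ev a (PP c) + ev b (PP c))) w); last exact: h.
by congr (fmap H (ev _) w); apply: ev_PPD.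
Qed.

Record CS (H : kFunctor k) := {
  act : pred nat;
  crd : forall A : comAlgType k, fobj H A -> nat -> A;
  sz : forall A : comAlgType k, fobj H A -> nat;
  eb : nat -> fobj H kt;
  crdD : forall A x y j, crd A (x + y) j = crd A x j + crd A y j;
  crd_nat : forall (A B : comAlgType k) (f : {lrmorphism A -> B}) x j, crd B (fmap H f x) j = f (crd A x j);
  crd_sz : forall A x j, (sz A x <= j)%N -> crd A x j = 0;
  crd_act : forall A x j, ~~ act j -> crd A x j = 0;
  crd_inj : forall A x y, (forall j, crd A x j = crd A y j) -> x = y;
  crd_eb : forall i j, crd kt (eb i) j = if (i == j) && act i then 'X else 0
}.
Arguments act {H} c _.
Arguments crd {H} c A _ _.
Arguments sz {H} c A _.
Arguments eb {H} c _.
Arguments crdD {H} c A x y j.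
Arguments crd_nat {H} c A B f x j.
Arguments crd_sz {H} c A x j _.
Arguments crd_act {H} c A x j _.
Arguments crd_inj {H} c A x y _.
Arguments crd_eb {H} c i j.

Section CSth.
Variables (H : kFunctor k) (cs : CS H).
Local Notation crd := (crd cs).
Local Notation sz := (sz cs).
Local Notation eb := (eb cs).

Lemma crd0 (A : comAlgType k) j : crd A 0 j = 0.
Proof. by apply: (@addrI _ (crd A 0 j)); rewrite -(crdD cs) !addr0. Qed.

Lemma crd_sum (A : comAlgType k) m (X : 'I_m -> fobj H A) j : crd A (\sum_(i < m) X i) j = \sum_(i < m) crd A (X i) j.
Proof.
elim: m X => [|m IH] X; first by rewrite !big_ord0 crd0.
by rewrite !big_ord_recr /= (crdD cs) IH.
Qed.

Lemma crd_ev_eb (A : comAlgType k) (a : A) i j : crd A (fmap H (ev a) (eb i)) j = if (i == j) && act cs i then a else 0.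
Proof. by rewrite (crd_nat cs) (crd_eb cs); case: ((i == j) && act cs i); [apply: evX | apply: rmorph0]. Qed.

Lemma recon (A : comAlgType k) (x : fobj H A) N : (sz A x <= N)%N ->
  x = \sum_(j < N) fmap H (ev (crd A x j)) (eb j).
Proof.
move=> hN; apply: (crd_inj cs) => l; rewrite crd_sum.
under eq_bigr => j _ do rewrite crd_ev_eb.
case: (ltnP l N) => hl.
  rewrite (sum_single (Ordinal hl)) /= ?eqxx /=.
    by case: (boolP (act cs l)) => // na; rewrite (crd_act cs).
  by move=> j; rewrite -val_eqE /= => /negbTE ->.
rewrite (crd_sz cs) ?(leq_trans hN) // big1 // => j _.
by case: eqP => // e; move: (ltn_ord j); rewrite e ltnNge hl.
Qed.

Lemma eb_prim i : prim (eb i).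
Proof.
move=> A a b; apply: (crd_inj cs) => l.
by rewrite (crdD cs) !crd_ev_eb; case: ifP; rewrite ?addr0.
Qed.

Lemma prim_crd w l : prim w -> sprim (crd kt w l).
Proof. by move=> h a b; rewrite -!(crd_nat cs) h (crdD cs). Qed.

End CSth.
End Fun.
Arguments CS {k} H.
Arguments prim {k H} w.
Arguments act {k H} c _.
Arguments crd {k H} c A _ _.
Arguments sz {k H} c A _.
Arguments eb {k H} c _.
Arguments crdD {k H} c A x y j.
Arguments crd_nat {k H} c A B f x j.
Arguments crd_sz {k H} c A x j _.
Arguments crd_act {k H} c A x j _.
Arguments crd_inj {k H} c A x y _.
Arguments crd_eb {k H} c i j.
Arguments recon {k H} cs {A x N} _.

Section Main.
Variable k : fieldType.
Local Notation kt := ({poly k} : comAlgType k).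
Variables (F G : kFunctor k) (csF : CS F) (csG : CS G) (p : natTrans F G).
Hypothesis epi : epimorphism p.

Definition xf (j : nat) : fobj F kt :=
  xchoose (let: ex_intro x hx := epi kt (eb csG j) in ex_intro (fun x => p kt x == eb csG j) x (introT eqP hx)).

Lemma xfP j : p kt (xf j) = eb csG j.
Proof. by apply/eqP; rewrite /xf; apply: (xchooseP (P := fun x => p kt x == eb csG j)). Qed.

Definition hh (j : nat) : fobj F kt :=
  \sum_(i < sz csF kt (xf j)) fmap F (ev (PP (crd csF kt (xf j) i) : kt)) (eb csF i).

Lemma hh_prim j : prim (hh j).
Proof. by apply: prim_sum => i; apply: prim_fmap_PP; apply: eb_prim. Qed.

Lemma hhP j : p kt (hh j) = eb csG j.
Proof.
apply: (crd_inj csG) => l.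
have -> : crd csG kt (eb csG j) l = PP (crd csG kt (eb csG j) l).
  rewrite (crd_eb csG); case: ifP => _; [by rewrite PPX | by rewrite PP0].
rewrite -(xfP j) (@recon _ _ csF kt (xf j) _ (leqnn _)) /hh !nt_sum !crd_sum PP_sum.
apply: eq_bigr => i _.
rewrite !nt_nat !(crd_nat csG); apply: K.
by apply: prim_crd; apply: prim_nt; apply: eb_prim.
Qed.



Definition sig0 {A : comAlgType k} (y : fobj G A) : fobj F A :=
  \sum_(j < sz csG A y) fmap F (ev (crd csG A y j)) (hh j).

Lemma sig_wide (A : comAlgType k) (y : fobj G A) N : (sz csG A y <= N)%N ->
  sig0 y = \sum_(j < N) fmap F (ev (crd csG A y j)) (hh j).
Proof.
move=> hN; rewrite /sig0 (big_ord_widen N (fun j => fmap F (ev (crd csG A y j)) (hh j))) //.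
rewrite big_mkcond; apply: eq_bigr => j _; case: ltnP => // hj.
by rewrite (crd_sz csG) // prim0 //; apply: hh_prim.
Qed.

Lemma sigD (A : comAlgType k) (x y : fobj G A) : sig0 (x + y) = sig0 x + sig0 y.
Proof.
set N := (sz csG A x + sz csG A y + sz csG A (x + y))%N.
rewrite !(@sig_wide _ _ N) /N; try lia.
rewrite -big_split /=; apply: eq_bigr => j _.
have e : crd csG A (x + y) j = crd csG A x j + crd csG A y j by apply: crdD.
by rewrite e; apply: hh_prim.
Qed.

Lemma sig_nat (A B : comAlgType k) (f : {lrmorphism A -> B}) (y : fobj G A) :
  sig0 (fmap G f y) = fmap F f (sig0 y).
Proof.
set N := (sz csG A y + sz csG B (fmap G f y))%N.
rewrite !(@sig_wide _ _ N) /N; try lia.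
rewrite fmap_sum; apply: eq_bigr => j _.
rewrite fmap_ev_comp.
by congr (fmap F (ev _) _); apply: crd_nat.
Qed.

Definition sigma : natTrans G F := @NatTrans k G F (@sig0) sigD sig_nat.

Lemma split_main : splits p.
Proof.
exists sigma => A y /=.
rewrite /sig0 nt_sum [RHS](@recon _ _ csG A y _ (leqnn _)).
by apply: eq_bigr => j _; rewrite nt_nat hhP.
Qed.

End Main.

Section Inst.
Variable k : fieldType.
Local Notation kt := ({poly k} : comAlgType k).

Lemma CS_iso (F H : kFunctor k) (phi : natTrans F H) (psi : natTrans H F) :
  (forall (A : comAlgType k) x, psi A (phi A x) = x) ->
  (forall (A : comAlgType k) y, phi A (psi A y) = y) -> CS H -> CS F.
Proof.
move=> h1 h2 cs.
refine (@Build_CS k F (act cs) (fun A x j => crd cs A (phi A x) j)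
   (fun A x => sz cs A (phi A x)) (fun i => psi kt (eb cs i)) _ _ _ _ _ _).
- by move=> A x y j; rewrite ntD (crdD cs).
- by move=> A B f x j; rewrite nt_nat (crd_nat cs).
- by move=> A x j hj; rewrite (crd_sz cs).
- by move=> A x j hj; rewrite (crd_act cs).
- move=> A x y hxy; rewrite -(h1 A x) -(h1 A y); congr (psi A _).
  exact: (crd_inj cs).
- by move=> i j; rewrite h2 (crd_eb cs).
Qed.

Lemma CS_Fin n : CS (GaFin k n).
Proof.
refine (@Build_CS k (GaFin k n) (fun j => (j < n)%N)
   (fun A (x : 'rV[A]_n) j => \sum_(i < n | (i : nat) == j) x 0 i)
   (fun A x => n) (fun i => \row_(l < n) (if (l : nat) == i then ('X : kt) else 0)) _ _ _ _ _ _).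
- by move=> A x y j; rewrite -big_split /=; apply: eq_bigr => i _; rewrite mxE.
- move=> A B f x j; rewrite raddf_sum /=; apply: eq_bigr => i _.
  by rewrite /fmap /= mxE.
- move=> A x j hj; rewrite big_pred0 // => i; apply/negbTE/eqP => e.
  by move: (ltn_ord i); rewrite e ltnNge hj.
- move=> A x j hj; rewrite big_pred0 // => i; apply/negbTE/eqP => e.
  by move: (ltn_ord i) hj; rewrite e => ->.
- move=> A x y hxy; apply/matrixP => a b; rewrite ord1.
  have := hxy b; rewrite (big_pred1 b) ?(big_pred1 b) // => i /=; exact: val_eqE.
- move=> i j; case: (ltnP j n) => hj.
    rewrite (big_pred1 (Ordinal hj)) /=; last by move=> l /=; apply/eqP/eqP => [e|->] //; apply: val_inj.
    rewrite mxE /= eq_sym.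
    case: eqP => [->|]; by rewrite ?hj.
  rewrite big_pred0; last first.
    by move=> l; apply/negbTE/eqP => e; move: (ltn_ord l); rewrite e ltnNge hj.
  by case: eqP => // ->; rewrite ltnNge hj andbF.
Qed.

Lemma CS_Inf : CS (GaInf k).
Proof.
refine (@Build_CS k (GaInf k) (fun _ => true)
   (fun A (x : {poly A}) j => x`_j)
   (fun A x => size x) (fun i => ('X : kt) *: 'X^i) _ _ _ _ _ _).
- by move=> A x y j; rewrite coefD.
- by move=> A B f x j; rewrite /fmap /= coef_map.
- by move=> A x j hj; rewrite nth_default.
- by [].
- by move=> A x y hxy; apply/polyP.
- by move=> i j; rewrite coefZ coefXn eq_sym andbT; case: eqP; rewrite ?mulr1 ?mulr0.
Qed.

Lemma CS_Ga (a : option nat) : CS (Ga k a).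
Proof. by case: a => [n|]; [exact: CS_Fin | exact: CS_Inf]. Qed.

End Inst.

Theorem mainTheorem7 (k : fieldType) (F G : kFunctor k) (pi : natTrans F G) :
  strictly_additive F -> strictly_additive G -> epimorphism pi -> splits pi.
Proof.
move=> [a [phiF [psiF [hF1 hF2]]]] [b [phiG [psiG [hG1 hG2]]]] epi.
exact: (@split_main k F G (@CS_iso k _ _ _ _ hF1 hF2 (CS_Ga k a)) (@CS_iso k _ _ _ _ hG1 hG2 (CS_Ga k b)) pi epi).
Qed.
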